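(* Let $A$ be a normed vector space over $\mathbb C$ and give $A^\vee$ the topology of uniform convergence on compact sets. Then on $\mathrm{Max}\,A$ the lower Vietoris topology coincides with the topology generated by the sets $\{V\in\mathrm{Max}\,A: F(V)\cap K'=\emptyset\}$ with $K'\subset A^\vee$ compact.
   Context: $\mathrm{Max}\,A$ is the set of closed subspaces of $A$; its lower Vietoris topology is generated by $\{V:V\cap U\ne\emptyset\}$, $U\subset A$ open. $A^\vee$ is the continuous dual with subbasis $\{\phi:\phi(K)\subset U\}$, $K\subset A$ compact, $U\subset\mathbb C$ open; $F(V)=\{\phi\in A^\vee:\phi|_V=0\}$. *)

(* Defs.v *)
From HB Require Import structures.
From mathcomp Require Import all_boot all_order all_algebra.
From mathcomp Require Import complex.
From mathcomp Require Import all_classical all_reals all_analysis.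
Set Implicit Arguments. Unset Strict Implicit. Unset Printing Implicit Defensive.
Import Order.TTheory GRing.Theory Num.Theory.
Import numFieldNormedType.Exports.
Local Open Scope classical_set_scope.
Local Open Scope ring_scope.

Definition is_topology_on (X : Type) (O : set (set X)) : Prop :=
  O setT /\
  (forall U V, O U -> O V -> O (U `&` V)) /\
  (forall (I : Type) (F : I -> set X), (forall i, O (F i)) -> O (\bigcup_i F i)).

Definition generated_topology (X : Type) (S : set (set X)) : set (set X) :=
  fun U => forall O : set (set X), is_topology_on O -> S `<=` O -> O U.

Definition compact_wrt (X : Type) (O : set (set X)) (K : set X) : Prop :=
  forall (I : Type) (F : I -> set X), (forall i, O (F i)) ->
    K `<=` \bigcup_i F i ->
    exists D : set I, finite_set D /\ K `<=` \bigcup_(i in D) F i.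

Section Dual.
Variables (R : realType) (A : normedModType R[i]).

Definition closed_subspace (V : set A) : Prop :=
  closed V /\ V 0 /\ (forall (a : R[i]) (u v : A), V u -> V v -> V (a *: u + v)).

Definition MaxA := {V : set A | closed_subspace V}.

(* continuous linear functionals A -> C; (R[i])^o is C with its
   canonical normed (modulus) topology *)
Definition is_cont_linear_functional (f : A -> (R[i])^o) : Prop :=
  (forall (a : R[i]) (u v : A), f (a *: u + v) = a * f u + f v) /\ continuous f.

Definition dual := {f : A -> (R[i])^o | is_cont_linear_functional f}.

Definition dual_subbasis : set (set dual) :=
  fun W => exists (K : set A) (U : set (R[i])^o),
    compact K /\ open U /\ W = [set phi : dual | (sval phi) @` K `<=` U].

Definition dual_open : set (set dual) := generated_topology dual_subbasis.

(* F(V) = annihilator of V *)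
Definition annihilator (V : MaxA) : set dual :=
  [set phi : dual | forall x, sval V x -> sval phi x = 0].

Definition lower_vietoris_subbasis : set (set MaxA) :=
  fun W => exists U : set A, open U /\
    W = [set V : MaxA | sval V `&` U !=set0].

Definition annihilator_subbasis : set (set MaxA) :=
  fun W => exists K' : set dual, compact_wrt dual_open K' /\
    W = [set V : MaxA | annihilator V `&` K' = set0].

End Dual.

(* Main.v *)
Require Import Defs.
From HB Require Import structures.
From mathcomp Require Import all_boot all_order all_algebra.
From mathcomp Require Import complex.
From mathcomp Require Import all_classical all_reals all_analysis.
Import numFieldNormedType.Exports.
Set Implicit Arguments. Unset Strict Implicit. Unset Printing Implicit Defensive.
Import Order.TTheory GRing.Theory Num.Theory.
Local Open Scope classical_set_scope.
Local Open Scope ring_scope.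
From mathcomp Require Import ring.
From mathcomp Require Import lra.
From mathcomp Require Import finmap.

Section Gen.
Variable X : Type.
Implicit Types S : set (set X).

Lemma gen_top S : is_topology_on (generated_topology S).
Proof.
split; [|split].
- by move=> O [].
- by move=> U V gU gV O tO SO; case: (tO) => _ [+ _]; apply; [apply: gU|apply: gV].
- by move=> I F gF O tO SO; case: (tO) => _ [_]; apply => i; apply: gF.
Qed.

Lemma gen_sub S1 S2 : S1 `<=` generated_topology S2 ->
  generated_topology S1 `<=` generated_topology S2.
Proof. by move=> h W gW; apply: gW; [apply: gen_top|]. Qed.

Lemma gen_base S W : S W -> generated_topology S W.
Proof. by move=> SW O _ SO; apply: SO. Qed.

Lemma gen_local S W : (forall V, W V -> exists N, generated_topology S N /\ N V /\ N `<=` W) ->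
  generated_topology S W.
Proof.
move=> h.
have /(_ _)/cid hN : forall p : {V | W V}, exists N, generated_topology S N /\ N (sval p) /\ N `<=` W.
  by move=> [V WV]; apply: h.
have -> : W = \bigcup_p sval (hN p).
  apply/seteqP; split => [V WV|V [p _]].
    by exists (exist _ V WV) => //; case: (svalP (hN (exist _ V WV))) => _ [].
  by case: (svalP (hN p)) => _ [_]; apply.
by case: (gen_top S) => _ [_]; apply => p; case: (svalP (hN p)).
Qed.

Lemma gen_bigcap_nat S (h : nat -> set X) n :
  (forall k, generated_topology S (h k)) ->
  generated_topology S (\bigcap_(k in `I_n) h k).
Proof.
move=> hh; elim: n => [|n IH].
  have -> : \bigcap_(k in `I_0) h k = setT by apply/seteqP; split => // x _ i.
  by case: (gen_top S).
have -> : \bigcap_(k in `I_n.+1) h k = (\bigcap_(k in `I_n) h k) `&` h n.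
  apply/seteqP; split => x.
    move=> H; split; last by apply: H; rewrite /= ltnS.
    by move=> k kn; apply: H; rewrite /= ltnS ltnW.
  move=> [H1 H2] k; rewrite /= ltnS leq_eqVlt => /orP[/eqP->//|kn]; exact: H1.
by case: (gen_top S) => _ [+ _]; apply.
Qed.

Lemma gen_bigcap S (I : Type) (D : set I) (f : I -> set X) :
  finite_set D -> (forall i, generated_topology S (f i)) ->
  generated_topology S (\bigcap_(i in D) f i).
Proof.
move=> [n /card_esym /card_bijP [g [g' _ gK]]] hf.
pose h k := match pselect (`I_n k) with
  | left pf => f (val (g (exist _ k (mem_set pf))))
  | right _ => setT end.
have -> : \bigcap_(i in D) f i = \bigcap_(k in `I_n) h k.
  apply/seteqP; split => x.
    move=> H k kn; rewrite /h; case: pselect => // pf; apply: H.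
    exact: set_mem (valP (g _)).
  move=> H i Di.
  case E: (g' (exist _ i (mem_set Di))) => [k kn].
  have gk : g (exist _ k kn) = exist _ i (mem_set Di) by rewrite -E gK.
  have kn' := set_mem kn.
  have := H k kn'; rewrite /h; case: pselect => // pf.
  have -> : exist (fun k => k \in `I_n) k (mem_set pf) = exist _ k kn.
    by congr exist; apply: eq_irrelevance.
  by rewrite gk.
apply: gen_bigcap_nat => k; rewrite /h; destruct (pselect (`I_n k)); first exact: hf.
by case: (gen_top S).
Qed.
End Gen.
Lemma open_norm_gt (K : numFieldType) (V : normedModType K) (r : K) :
  open [set z : V | r < `|z|].
Proof.
rewrite openE => z /= hz; apply/nbhs_ballP; exists (`|z| - r); first by rewrite /= subr_gt0.
move=> w; rewrite -ball_normE /ball_ /= => lt.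
have := ler_normD (z - w) w; rewrite subrK => h.
rewrite ltrBrDl in lt.
have : `|z - w| + r < `|z - w| + `|w| by rewrite addrC; exact: lt_le_trans lt h.
by rewrite ltrD2l.
Qed.
Lemma finite_nat_bound (I : Type) (D : set I) (f : I -> nat) :
  finite_set D -> exists M, forall i, D i -> (f i <= M)%N.
Proof.
move=> [n /card_esym /card_bijP [g [g' _ gK]]].
pose h k := match pselect (`I_n k) with
  | left pf => f (val (g (exist _ k (mem_set pf))))
  | right _ => 0%N end.
exists (\max_(k < n) h k) => i Di.
case E: (g' (exist _ i (mem_set Di))) => [k kn].
have gk : g (exist _ k kn) = exist _ i (mem_set Di) by rewrite -E gK.
have kn' : (k < n)%N := set_mem kn.
apply: (leq_trans _ (leq_bigmax (Ordinal kn'))) => /=.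
rewrite /h; case: pselect => // pf.
have -> : exist (fun k => k \in `I_n) k (mem_set pf) = exist _ k kn.
  by congr exist; apply: eq_irrelevance.
by rewrite gk.
Qed.

Lemma archiC (R : realType) (z : R[i]) : exists m : nat, `|z| < m%:R.
Proof.
rewrite normc_def; set r := Num.sqrt _.
exists (Num.bound r); rewrite -(rmorph_nat (real_complex R)) ltcR.
by apply: archi_boundP; rewrite sqrtr_ge0.
Qed.

Section Lip.
Variables (R : realType) (A : normedModType R[i]).

Lemma lin_scale (f : A -> (R[i])^o) (k : R[i]) (a : A) :
  (forall (a : R[i]) (u v : A), f (a *: u + v) = a * f u + f v) ->
  f (k *: a) = k * f a.
Proof.
move=> lin; have f0 : f 0 = 0.
  by have := lin 1 0 0; rewrite scale1r addr0 mul1r => /eqP; rewrite -subr_eq subrr eq_sym => /eqP.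
by have := lin k a 0; rewrite addr0 f0 addr0.
Qed.

Lemma cont_lin_bounded (f : A -> (R[i])^o) :
  is_cont_linear_functional f -> exists L : R[i], 0 < L /\ forall a, `|f a| <= L * `|a|.
Proof.
move=> [lin cf].
have f0 : f 0 = 0 by have := lin_scale 0 0 lin; rewrite scale0r mul0r.
have : f x @[x --> (0:A)] --> (0 : (R[i])^o) by rewrite -f0; exact: cf.
move=> /cvgrPdist_lt /(_ 1 ltr01).
move=> /nbhs_ballP [d /= d0 hd].
exists (2 / d); split; first by rewrite divr_gt0.
move=> a; have [->|a0] := eqVneq a 0; first by rewrite f0 !normr0 mulr0.
have na0 : 0 < `|a| by rewrite normr_gt0.
pose k := d / (2 * `|a|).
have k0 : 0 < k by rewrite divr_gt0 // mulr_gt0.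
have : ball (0 : A) d (k *: a).
  rewrite -ball_normE /ball_ /= sub0r normrN normrZ gtr0_norm // /k.
  have -> : d / (2 * `|a|) * `|a| = d / 2 by field; rewrite gt_eqF.
  by rewrite ltr_pdivrMr // ltr_pMr // ltr1n.
move=> /hd /=; rewrite sub0r normrN lin_scale // normrM gtr0_norm // => h.
have : `|f a| < k^-1 by rewrite -(ltr_pM2l k0) mulfV ?gt_eqF.
have -> : k^-1 = 2 / d * `|a|.
  by rewrite /k; field; rewrite !gt_eqF.
by move=> /ltW.
Qed.
End Lip.
Lemma filter_bigcap_nat T (F : set_system T) (FF : Filter F) (h : nat -> set T) n :
  (forall k, F (h k)) -> F (\bigcap_(k in `I_n) h k).
Proof.
move=> hh; elim: n => [|n IH].
  have -> : \bigcap_(k in `I_0) h k = setT by apply/seteqP; split => // x _ i.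
  exact: filterT.
have -> : \bigcap_(k in `I_n.+1) h k = (\bigcap_(k in `I_n) h k) `&` h n.
  apply/seteqP; split => x.
    move=> H; split; last by apply: H; rewrite /= ltnS.
    by move=> k kn; apply: H; rewrite /= ltnS ltnW.
  move=> [H1 H2] k; rewrite /= ltnS leq_eqVlt => /orP[/eqP->//|kn]; exact: H1.
exact: filterI.
Qed.

Lemma not_cluster (T : topologicalType) (F : set_system T) (p : T) :
  ~ cluster F p -> exists B, F B /\ ~ B p.
Proof.
move=> /existsNP [U /existsNP [V /not_implyP [FU /not_implyP [nV]]]] UV0.
exists U; split => // Up; apply: UV0; exists p; split => //.
exact: nbhs_singleton.
Qed.

Lemma seq_compact (R : realType) (A : normedModType R[i]) (x : nat -> A) :
  (forall n, `|x n| <= (n.+1%:R)^-1) -> compact ([set 0] `|` range x).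
Proof.
move=> hx F PF FK; apply: contrapT => hne.
have ncl : forall p, ([set 0] `|` range x) p -> ~ cluster F p.
  by move=> p Kp clp; apply: hne; exists p.
have /existsNP [B0 /existsNP [C0 /not_implyP [FB0 /not_implyP [nC0]]]] :=
  ncl 0 (or_introl erefl).
move=> B0C0.
move: nC0 => /nbhs_ballP [d /= d0 hd].
have [m hm] := archiC (d^-1).
have hB : forall k, exists B, F B /\ ~ B (x k).
  by move=> k; apply: not_cluster; apply: ncl; right; exists k.
pose Bk k := sval (cid (hB k)).
have FBs : F (B0 `&` ([set 0] `|` range x) `&` \bigcap_(k in `I_m) Bk k).
  apply: filterI; first exact: filterI.
  by apply: filter_bigcap_nat => k; case: (svalP (cid (hB k))).
have [y [[B0y Ky] By]] := filter_ex FBs.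
case: Ky => [y0|[k _ xk]].
  apply: B0C0; exists y; split => //; apply: hd.
  by rewrite y0; apply: ballxx.
have [km|mk] := ltnP k m.
  have := By k km; rewrite /Bk; case: (svalP (cid (hB k))) => _ + h; rewrite -xk in h.
  by move=> /(_ h).
apply: B0C0; exists y; split => //; apply: hd.
rewrite -ball_normE /ball_ /= sub0r normrN -xk.
apply: (le_lt_trans (hx k)).
have m0 : 0 < (k.+1%:R : R[i]) by rewrite ltr0n.
rewrite -[d]invrK ltf_pV2 ?posrE ?invr_gt0 //.
move: hm; rewrite gtr0_norm ?invr_gt0 // => hm.
by apply: (lt_le_trans hm); rewrite ler_nat; exact: leqW.
Qed.
Lemma compact_bounded_dual' (R : realType) (A : normedModType R[i]) (K' : set (dual A)) :
  compact_wrt (@dual_open R A) K' ->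
  exists c : R[i], 0 < c /\ forall phi, K' phi -> forall a, `|sval phi a| <= c * `|a|.
Proof.
move=> cK'; apply: contrapT => H.
have H' : forall n : nat, exists p : dual A * A,
    K' p.1 /\ (n.+1 ^ 2)%:R * `|p.2| < `|sval p.1 p.2|.
  move=> n; apply: contrapT => Hn; apply: H; exists (n.+1 ^ 2)%:R.
  split; first by rewrite ltr0n expn_gt0.
  move=> phi Kphi a; rewrite real_leNgt ?ger0_real ?normr_ge0 ?mulr_ge0 ?ler0n //.
  by apply/negP => lt; apply: Hn; exists (phi, a).
pose ph n := (sval (cid (H' n))).1.
pose a n := (sval (cid (H' n))).2.
have hn n : K' (ph n) /\ (n.+1 ^ 2)%:R * `|a n| < `|sval (ph n) (a n)|.
  exact: svalP (cid (H' n)).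
have lin n : forall (k : R[i]) (u : A), sval (ph n) (k *: u) = k * sval (ph n) u.
  by move=> k u; apply: lin_scale; case: (svalP (ph n)).
have an0 n : 0 < `|a n|.
  rewrite normr_gt0; apply/eqP => a0; have := (hn n).2.
  by rewrite a0 normr0 mulr0 -(scale0r (0 : A)) lin mul0r normr0 ltxx.
pose x n := ((n.+1)%:R * `|a n|)^-1 *: a n.
have xn n : `|x n| = (n.+1%:R)^-1.
  rewrite /x normrZ normfV normrM normr_nat normr_id.
  by field; rewrite !gt_eqF ?ltr0n.
have phx n : (n.+1)%:R < `|sval (ph n) (x n)|.
  rewrite /x lin normrM normfV normrM normr_nat normr_id.
  have k0 : 0 < (n.+1%:R * `|a n|)^-1 :> R[i] by rewrite invr_gt0 mulr_gt0 ?ltr0n.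
  have := (hn n).2; rewrite -(ltr_pM2l k0) => h.
  apply: le_lt_trans h; rewrite le_eqVlt; apply/orP; left; apply/eqP.
  by rewrite natrX; field; rewrite !gt_eqF ?ltr0n.
set Kc := [set 0] `|` range x.
have cKc : compact Kc by apply: seq_compact => n; rewrite xn.
pose G (m : nat) := [set psi : dual A | sval psi @` Kc `<=` ball (0 : (R[i])^o) m%:R].
have oG : forall m, dual_open (G m).
  move=> m; apply: gen_base; exists Kc, (ball (0 : (R[i])^o) m%:R).
  by split => //; split => //; exact: ball_open.
have cov : K' `<=` \bigcup_m G m.
  move=> psi Kpsi; have [L [L0 hL]] := cont_lin_bounded (svalP psi).
  have [m hm] := archiC L; exists m => // _ [y Ky <-].
  rewrite -ball_normE /ball_ /= sub0r normrN.
  apply: (le_lt_trans (hL y)); apply: (le_lt_trans _ hm).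
  rewrite gtr0_norm // ler_piMr ?(ltW L0) //.
  case: Ky => [->|[n _ <-]]; first by rewrite normr0.
  by rewrite xn invf_le1 ?ler1n ?ltr0n.
have [D [fD covD]] := cK' _ G oG cov.
have [M hM] := finite_nat_bound id fD.
have [m Dm Gm] := covD _ (hn M).1.
have : `|sval (ph M) (x M)| < m%:R.
  have : ball (0 : (R[i])^o) m%:R (sval (ph M) (x M)).
    by apply: Gm; exists (x M) => //; right; exists M.
  by rewrite -ball_normE /ball_ /= sub0r normrN.
move=> /(lt_trans (phx M)); rewrite ltr_nat => lt.
by have := leq_trans lt (hM _ Dm); rewrite leqNgt ltnS leqnSn.
Qed.
Section Disc.
Variable R : realType.

Lemma cplx_cont : continuous (fun p : R * R => (Complex p.1 p.2 : (R[i])^o)).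
Proof.
move=> p; apply/cvgrPdist_lt => e e0.
have : (0 : R[i]) < e := e0.
rewrite ltcE /= => /andP [/eqP Ie e0'].
have eE : e = (complex.Re e)%:C%C by case: e Ie {e0 e0'} => a b /= ->.
apply/(@nbhs_ballP R (R * R)%type); exists (complex.Re e / 2); first by rewrite /= divr_gt0.
case=> q1 q2 [/= b1 b2]; move: b1 b2; rewrite -!ball_normE /ball_ /= => b1 b2.
rewrite normc_def /= eE ltcR.
set a := p.1 - q1 in b1 *; set b := p.2 - q2 in b2 *.
have h : a ^+ 2 + b ^+ 2 <= (`|a| + `|b|) ^+ 2.
  rewrite -[a ^+ 2]real_normK ?num_real // -[b ^+ 2]real_normK ?num_real //.
  have := normr_ge0 a; have := normr_ge0 b; nra.
rewrite -(@ltr_pXn2r _ 2) // ?sqrtr_ge0 ?sqr_sqrtr ?addr_ge0 ?sqr_ge0 ?nnegrE ?sqrtr_ge0 ?(ltW e0') //.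
apply: (le_lt_trans h); rewrite ltr_pXn2r ?nnegrE ?addr_ge0 ?normr_ge0 ?(ltW e0') //.
have := normr_ge0 a; have := normr_ge0 b; lra.
Qed.

Lemma disc_in_compact (s : R) : exists B : set (R[i])^o, compact B /\
  forall z : (R[i])^o, `|z| <= s%:C%C -> B z.
Proof.
exists ((fun p : R * R => (Complex p.1 p.2 : (R[i])^o)) @` (`[-s, s] `*` `[-s, s]))%classic.
split.
  apply: continuous_compact; first exact: continuous_subspaceT cplx_cont.
  by apply: compact_setX; exact: segment_compact.
case=> a b; rewrite normc_def lecR /= => h.
have ha : `|a| <= s.
  apply: le_trans h; rewrite -sqrtr_sqr; apply: ler_wsqrtr.
  by rewrite lerDl sqr_ge0.
have hb : `|b| <= s.
  apply: le_trans h; rewrite -sqrtr_sqr; apply: ler_wsqrtr.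
  by rewrite lerDr sqr_ge0.
exists (a, b) => //; split; rewrite /= in_itv /= -ler_norml //.
Qed.
End Disc.
Section Cpt.
Variables (R : realType) (A : normedModType R[i]).

Definition linf (f : A -> (R[i])^o) :=
  forall (k : R[i]) (u v : A), f (k *: u + v) = k * f u + f v.

Lemma linf_sub f : linf f -> forall u v, f (u - v) = f u - f v.
Proof.
move=> lin u v; have := lin (-1) v u; rewrite scaleN1r mulN1r => h.
by rewrite addrC h addrC.
Qed.

Lemma lin_bounded_cont (f : A -> (R[i])^o) (c : R[i]) :
  linf f -> 0 < c -> (forall a, `|f a| <= c * `|a|) -> continuous f.
Proof.
move=> lin c0 hb x; apply/cvgrPdist_lt => e e0.
apply/nbhs_ballP; exists (e / c); first by rewrite /= divr_gt0.
move=> y; rewrite -ball_normE /ball_ /= => h.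
rewrite -linf_sub //; apply: (le_lt_trans (hb _)).
by move: h; rewrite -(ltr_pM2l c0) mulrCA mulfV ?gt_eqF // mulr1.
Qed.

Definition Wset (x : A) (c : R[i]) : set {family compact, A -> (R[i])^o} :=
  [set f | linf f /\ f x = 1 /\ forall a, `|f a| <= c * `|a|].

Lemma closure_Wset (x : A) (c : R[i]) : 0 < c -> closure (Wset x c) `<=` Wset x c.
Proof.
move=> c0 p; rewrite closureEcvg => -[G PG [Gp WG]].
have GW : G (Wset x c) by apply: WG.
have pt : forall t, (fun g : A -> (R[i])^o => g t) @ G --> p t.
  move=> t; have H : {ptws, G --> (p : A -> (R[i])^o)}.
    by apply: pointwise_cvg_compact_family.
  by move/pointwise_cvgP : H => /(_ t).
have cl1 : forall y : (R[i])^o, closed [set y].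
  by move=> y; apply: compact_closed; [exact: norm_hausdorff| exact: compact_set1].
split; [|split].
- move=> k u v.
  have := @closed_cvg _ _ G PG (fun g : A -> (R[i])^o => g (k *: u + v) - (k * g u + g v)) _ (cl1 0).
  move=> /(_ _ (p (k *: u + v) - (k * p u + p v))).
  have -> : forall l, [set (0 : (R[i])^o)] l = (l = 0) by [].
  move=> h; apply/eqP; rewrite -subr_eq0; apply/eqP; apply: h.
    by apply: filterS GW => g [lg _]; rewrite /= lg subrr.
  apply: cvgB; first exact: pt.
  apply: cvgD; last exact: pt.
  by apply: cvgM; [exact: cvg_cst| exact: pt].
- apply: (@closed_cvg _ _ G PG (fun g : A -> (R[i])^o => g x) _ (cl1 1)).
    by apply: filterS GW => g [_ []].
  exact: pt.
- move=> a.
  have cl : closed (~` [set z : (R[i])^o | c * `|a| < `|z|]).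
    by apply: open_closedC; exact: open_norm_gt.
  have := @closed_cvg _ _ G PG (fun g : A -> (R[i])^o => g a) _ cl.
  move=> /(_ _ (p a)) h.
  have : ~ (c * `|a| < `|p a|).
    apply: h; last exact: pt.
    by apply: filterS GW => g [_ [_ hg]] /= lt; have := lt_le_trans lt (hg a); rewrite ltxx.
  move=> nlt; rewrite real_leNgt ?ger0_real ?normr_ge0 ?mulr_ge0 ?(ltW c0) //.
  by apply/negP.
Qed.

Lemma Wset_compact (x : A) (c : R[i]) : 0 < c -> compact (Wset x c).
Proof.
move=> c0.
have pc : precompact (Wset x c).
  have H := @pointwise_precompact_equicontinuous A (R[i])^o (@norm_hausdorff _ (R[i])^o) (Wset x c).
  apply: H.
  - move=> t; have [B [cB hB]] := disc_in_compact (complex.Re (c * `|t|)).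
    apply: (@precompact_subset _ _ B).
      move=> _ [f [_ [_ hf]] <-]; apply: hB.
      by rewrite RRe_real ?ger0_real ?mulr_ge0 ?normr_ge0 ?(ltW c0) //; exact: hf.
    rewrite precompactE -((closure_id B).1 _) //.
    exact: compact_closed (@norm_hausdorff _ (R[i])^o) cB.
  - move=> x0 E; rewrite -entourage_ballE => -[e /= e0 hE].
    apply/(@nbhs_ballP (R[i]) A); exists (e / c); first by rewrite /= divr_gt0.
    move=> y yb f [lf [_ hf]]; apply: hE => /=.
    move: yb; rewrite -!ball_normE /ball_ /= => yb.
    rewrite -linf_sub //; apply: (le_lt_trans (hf _)).
    by move: yb; rewrite -(ltr_pM2l c0) mulrCA mulfV ?gt_eqF // mulr1.
have : compact (closure (Wset x c)) by rewrite -precompactE.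
suff -> : closure (Wset x c) = Wset x c by [].
by apply/seteqP; split; [exact: closure_Wset| exact: subset_closure].
Qed.
End Cpt.
Section Cpt2.
Variables (R : realType) (A : normedModType R[i]).

HB.instance Definition _ := isPointed.Build {family compact, A -> (R[i])^o} (fun _ => 0).

Lemma dual_open_repr (Wd : set (dual A)) : dual_open Wd ->
  exists G : set {family compact, A -> (R[i])^o}, open G /\ forall phi, Wd phi <-> G (sval phi).
Proof.
move=> hW; apply: (hW (fun Wd => exists G : set {family compact, A -> (R[i])^o},
  open G /\ forall phi, Wd phi <-> G (sval phi))); first split; [|split|].
- by exists setT; split; [exact: openT|].
- move=> U V [G1 [oG1 hG1]] [G2 [oG2 hG2]]; exists (G1 `&` G2); split; first exact: openI.
  by move=> phi; split => -[a b]; split; [apply/hG1|apply/hG2|apply/hG1|apply/hG2].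
- move=> I F hF.
  pose G i := sval (cid (hF i)).
  exists (\bigcup_i G i); split.
    by apply: bigcup_open => i _; case: (svalP (cid (hF i))).
  move=> phi; split => -[i _ h]; exists i => //; have [_ e] := svalP (cid (hF i)).
    exact/e.
  exact/e.
- move=> _ [K [U [cK [oU ->]]]].
  pose S : set {family compact, A -> (R[i])^o} := [set g | g @` K `<=` U].
  exists (interior S); split; first exact: open_interior.
  move=> phi; split => [h|/interior_subset//].
  rewrite /interior /=.
  have := @fam_compact_nbhs A (R[i])^o K U (sval phi) oU h cK (svalP phi).2.
  by apply: filterS => g hg _ [y Ky <-]; apply: hg.
Qed.

Lemma Kset_compact' (x : A) (c : R[i]) : 0 < c ->
  compact_wrt (@dual_open R A)
    [set phi : dual A | sval phi x = 1 /\ forall a, `|sval phi a| <= c * `|a|].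
Proof.
move=> c0 I F oF cov.
pose G i := sval (cid (dual_open_repr (oF i))).
have hG i : open (G i) /\ forall phi, F i phi <-> G i (sval phi).
  exact: svalP (cid (dual_open_repr (oF i))).
have covW : Wset x c `<=` \bigcup_(i in [set: {classic I}]) G i.
  move=> f [lf [fx hf]].
  have cf : is_cont_linear_functional f by split => //; exact: lin_bounded_cont c0 hf.
  have [i _ Fi] := cov (exist _ f cf) (conj fx hf).
  by exists i => //; exact: (((hG i).2 (exist _ f cf)).1 Fi).
have cW : cover_compact (Wset x c : set {family compact, A -> (R[i])^o}).
  by rewrite -compact_cover; exact: Wset_compact.
have [D' _ covD] := cW {classic I} setT G (fun i _ => (hG i).1) covW.
exists ([set` D'] : set {classic I}); split; first exact: (@finite_fset {classic I} D').
move=> phi [phix hphi].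
have [lin _] := svalP phi.
have [i Di Gi] := covD (sval phi) (conj lin (conj phix hphi)).
by exists i => //; exact: (((hG i).2 phi).2 Gi).
Qed.
End Cpt2.
Section HB.
Variables (R : realType) (A : normedModType R[i]).
Local Notation rc := (real_complex R).

Lemma ReD (u v : R[i]) : complex.Re (u + v) = complex.Re u + complex.Re v.
Proof. by case: u; case: v. Qed.

Lemma Re_rcM (t : R) (w : R[i]) : complex.Re (rc t * w) = t * complex.Re w.
Proof. by case: w => w1 w2 /=; rewrite mul0r subr0. Qed.

Lemma Re_rc (t : R) : complex.Re (rc t) = t.
Proof. by []. Qed.

Lemma Re_le (u v : R[i]) : u <= v -> complex.Re u <= complex.Re v.
Proof. by rewrite lecE => /andP []. Qed.

Lemma norm_rc (t : R) : `|rc t| = rc `|t|.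
Proof. by rewrite normc_def /= expr0n /= addr0 sqrtr_sqr. Qed.

Lemma real_eq_rc (u : R[i]) : 0 <= u -> u = rc (complex.Re u).
Proof. by move=> /ger0_real /RRe_real ->. Qed.

Variable e : R[i].
Hypothesis e0 : 0 < e.

Definition pn (a : A) : R := complex.Re (`|a| / e).

Lemma pn_ge0 a : 0 <= pn a.
Proof.
have : 0 <= `|a| / e by rewrite divr_ge0 ?normr_ge0 ?ltW.
by rewrite lecE => /andP [].
Qed.

Lemma pnD a b : pn (a + b) <= pn a + pn b.
Proof.
rewrite /pn -ReD -mulrDl; apply: Re_le.
by rewrite ler_pM2r ?invr_gt0 // ler_normD.
Qed.

Lemma pnZ (t : R) a : pn (rc t *: a) = `|t| * pn a.
Proof. by rewrite /pn normrZ norm_rc -mulrA Re_rcM. Qed.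

Lemma pnN a : pn (- a) = pn a.
Proof. by rewrite /pn normrN. Qed.


Variables (V : set A) (x : A).
Hypothesis V0 : V 0.
Hypothesis Vlin : forall (a : R[i]) u v, V u -> V v -> V (a *: u + v).
Hypothesis dist : forall v, V v -> e <= `|x - v|.

Lemma VB u v : V u -> V v -> V (v - u).
Proof. by move=> Vu Vv; rewrite addrC -scaleN1r; apply: Vlin. Qed.

Lemma VZ (a : R[i]) u : V u -> V (a *: u).
Proof. by move=> Vu; rewrite -[_ *: _]addr0; apply: Vlin. Qed.

Lemma xnotV : ~ V x.
Proof.
move=> Vx; have := dist Vx; rewrite subrr normr0 => h.
by have := lt_le_trans e0 h; rewrite ltxx.
Qed.

Definition fun_G (G : set (A * R)) := forall a r s, G (a, r) -> G (a, s) -> r = s.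
Definition lin_G (G : set (A * R)) := forall (t : R) a b r s,
  G (a, r) -> G (b, s) -> G (rc t *: a + b, t * r + s).
Definition ext_G (G : set (A * R)) := forall v (t : R[i]), V v -> G (v + t *: x, complex.Re t).
Definition dom_G (G : set (A * R)) := forall a r, G (a, r) -> r <= pn a.
Definition good G := [/\ fun_G G, lin_G G, ext_G G & dom_G G].

Definition G0 : set (A * R) := [set q | exists v t, V v /\ q = (v + t *: x, complex.Re t)].

Lemma Re_le_norm (t : R[i]) : complex.Re t <= complex.Re `|t|.
Proof.
rewrite normc_def /=; apply: le_trans (ler_norm _) _.
rewrite -sqrtr_sqr; apply: ler_wsqrtr; rewrite lerDl sqr_ge0 //.
Qed.

Lemma G0_good : good G0.
Proof.
split.
- move=> a r s [v1 [t1 [V1 [-> ->]]]] [v2 [t2 [V2 [e1 ->]]]].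
  have [->//|ne] := eqVneq t1 t2; exfalso; apply: xnotV.
  move: ne; rewrite -subr_eq0 => ne.
  have h : (t1 - t2) *: x = v2 - v1.
    have -> : (t1 - t2) *: x = (v1 + t1 *: x) - (v1 + t2 *: x).
      by rewrite opprD addrACA subrr add0r scalerBl.
    by rewrite e1 opprD addrACA subrr addr0.
  have -> : x = (t1 - t2)^-1 *: (v2 - v1).
    by rewrite -h scalerA mulVf ?scale1r // subr_eq0.
  by apply: VZ; apply: VB.
- move=> t a b r s [v1 [t1 [V1 [-> ->]]]] [v2 [t2 [V2 [-> ->]]]].
  exists (rc t *: v1 + v2), (rc t * t1 + t2); split; first exact: Vlin.
  rewrite ReD Re_rcM; congr (_, _).
  by rewrite scalerDr scalerA scalerDl addrACA.
- by move=> v t Vv; exists v, t.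
- move=> a r [v [t [Vv [-> ->]]]] /=.
  apply: le_trans (Re_le_norm t) _; apply: Re_le.
  rewrite ler_pdivlMr //.
  have [->|t0] := eqVneq t 0; first by rewrite normr0 mul0r normr_ge0.
  have -> : v + t *: x = t *: (x - (- t^-1) *: v).
    by rewrite scalerBr scalerA mulrN mulfV // scaleN1r opprK addrC.
  by rewrite normrZ ler_pM2l ?normr_gt0 //; apply: dist; apply: VZ.
Qed.


Definition PG (G : set (A * R)) := G = set0 \/ good G.

Lemma chain_PG (F : set (set (A * R))) : F `<=` PG -> total_on F subset ->
  PG (\bigcup_(X in F) X).
Proof.
move=> FP tot.
have hg : forall X q, F X -> X q -> good X.
  by move=> X q FX Xq; case: (FP X FX) => // X0; rewrite X0 in Xq.
have two : forall X1 X2 q1 q2, F X1 -> F X2 -> X1 q1 -> X2 q2 ->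
    exists X, [/\ F X, good X, X q1 & X q2].
  move=> X1 X2 q1 q2 F1 F2 h1 h2; case: (tot _ _ F1 F2) => sub.
    by exists X2; split => //; [exact: hg h2| exact: sub].
  by exists X1; split => //; [exact: hg h1| exact: sub].
case: (pselect (exists X, F X /\ X !=set0)) => [[X0 [FX0 [q0 X0q0]]]|none]; last first.
  left; apply/seteqP; split => // q [X FX Xq]; apply: none; exists X; split => //.
  by exists q.
right; split.
- move=> a r s [X1 F1 h1] [X2 F2 h2].
  have [X [_ [fX _ _ _] h1' h2']] := two _ _ _ _ F1 F2 h1 h2.
  exact: fX h1' h2'.
- move=> t a b r s [X1 F1 h1] [X2 F2 h2].
  have [X [FX [_ lX _ _] h1' h2']] := two _ _ _ _ F1 F2 h1 h2.
  by exists X => //; apply: lX.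
- move=> v t Vv; have [_ _ eX _] := hg _ _ FX0 X0q0.
  by exists X0 => //; apply: eX.
- move=> a r [X FX h]; have [_ _ _ dX] := hg _ _ FX h.
  exact: dX.
Qed.

Lemma exists_max : exists M, good M /\ forall B, M `<` B -> ~ PG B.
Proof.
have [M [PM maxM]] := Zorn_bigcup chain_PG.
exists M; split => //.
case: PM => // M0; exfalso; apply: (maxM G0); last by right; exact: G0_good.
rewrite M0; split => //; move=> /(_ (0 + 0 *: x, complex.Re 0)) h.
by have := h (ex_intro _ 0 (ex_intro _ 0 (conj V0 erefl))).
Qed.


Lemma max_total M : good M -> (forall B, M `<` B -> ~ PG B) -> forall a, exists r, M (a, r).
Proof.
move=> [fM lM eM dM] maxM a; apply: contrapT => nodom.
have nd : forall r, ~ M (a, r) by move=> r h; apply: nodom; exists r.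
have M00 : M (0, 0).
  by have := eM 0 0 V0; rewrite scale0r addr0; have -> : complex.Re (0 : R[i]) = 0 by [].
have Madd : forall b1 b2 r1 r2, M (b1, r1) -> M (b2, r2) -> M (b1 + b2, r1 + r2).
  by move=> b1 b2 r1 r2 h1 h2; have := lM 1 _ _ _ _ h1 h2; rewrite rmorph1 scale1r mul1r.
have Mscale : forall t b r, M (b, r) -> M (rc t *: b, t * r).
  by move=> t b r h; have := lM t _ _ _ _ h M00; rewrite !addr0.
pose E := [set y | exists b r, M (b, r) /\ y = r - pn (b - a)].
have key : forall b r b2 r2, M (b, r) -> M (b2, r2) -> r - pn (b - a) <= pn (b2 + a) - r2.
  move=> b r b2 r2 h h2; have := dM _ _ (Madd _ _ _ _ h h2).
  have := pnD (b - a) (b2 + a); rewrite addrACA addNr addr0; lra.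
have E0 : E !=set0 by exists (0 - pn (0 - a)), 0, 0.
have ubE : ubound E (pn (0 + a) - 0) by move=> y [b [r [h ->]]]; exact: key h M00.
pose c := sup E.
have c_ge : forall b r, M (b, r) -> r - pn (b - a) <= c.
  move=> b r h; apply: (ub_le_sup (ex_intro _ _ ubE)); by exists b, r.
have c_le : forall b2 r2, M (b2, r2) -> c <= pn (b2 + a) - r2.
  move=> b2 r2 h2; apply: ge_sup E0 _ => y [b [r [h ->]]]; exact: key h h2.
pose M' := [set q | exists b r (t : R), M (b, r) /\ q = (b + rc t *: a, r + t * c)].
apply: (maxM M'); last first; [right; split|split].
- move=> q r s [b1 [r1 [t1 [h1 [eq1 eq2]]]]] [b2 [r2 [t2 [h2 [eq3 eq4]]]]].
  rewrite eq2 eq4; have [et|ne] := eqVneq t1 t2.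
    move: eq3; rewrite eq1 et => /addIr eb; rewrite eb in h1.
    by rewrite (fM _ _ _ h1 h2).
  exfalso; apply: (nd ((t1 - t2)^-1 * (r2 - r1))).
  have hb : M (b2 - b1, r2 - r1).
    have := lM (-1) _ _ _ _ h1 h2; rewrite rmorphN1 scaleN1r mulN1r.
    by rewrite [- b1 + _]addrC [- r1 + _]addrC.
  have ha : rc (t1 - t2) *: a = b2 - b1.
    have -> : rc (t1 - t2) *: a = (b1 + rc t1 *: a) - (b1 + rc t2 *: a).
      by rewrite opprD addrACA subrr add0r rmorphB scalerBl.
    by rewrite -eq1 eq3 opprD addrACA subrr addr0.
  have -> : a = rc ((t1 - t2)^-1) *: (b2 - b1).
    by rewrite -ha scalerA -rmorphM mulVf ?rmorph1 ?scale1r // subr_eq0.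
  exact: Mscale.
- move=> t q1 q2 s1 s2 [b1 [r1 [t1 [h1 [-> ->]]]]] [b2 [r2 [t2 [h2 [-> ->]]]]].
  exists (rc t *: b1 + b2), (t * r1 + r2), (t * t1 + t2); split; first exact: lM.
  congr (_, _); last by ring.
  by rewrite scalerDr scalerA -rmorphM addrACA -scalerDl -rmorphD.
- move=> v t Vv; exists (v + t *: x), (complex.Re t), 0; split; first exact: eM.
  by rewrite rmorph0 scale0r addr0 mul0r addr0.
- move=> q r [b [r0 [t [h [-> ->]]]]].
  case: (ltgtP t 0) => [tneg|tpos|->]; last first.
  + by rewrite rmorph0 scale0r addr0 mul0r addr0; exact: dM h.
  + have h1 := c_le _ _ (Mscale t^-1 _ _ h).
    set y := rc t^-1 *: b + a in h1.
    have -> : b + rc t *: a = rc t *: y.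
      by rewrite /y scalerDr scalerA -rmorphM mulfV ?gt_eqF // rmorph1 scale1r.
    rewrite pnZ gtr0_norm //.
    have := ler_wpM2l (ltW tpos) h1; rewrite mulrBr mulrA mulfV ?gt_eqF // mul1r.
    lra.
  + have sp : 0 < - t by rewrite oppr_gt0.
    have h1 := c_ge _ _ (Mscale (- t)^-1 _ _ h).
    set y := rc (- t)^-1 *: b - a in h1.
    have -> : b + rc t *: a = rc (- t) *: y.
      rewrite /y scalerDr scalerA -rmorphM mulfV ?gt_eqF // rmorph1 scale1r.
      by rewrite scalerN rmorphN scaleNr opprK.
    rewrite pnZ gtr0_norm //.
    have := ler_wpM2l (ltW sp) h1; rewrite mulrBr mulrA mulfV ?gt_eqF // mul1r.
    lra.
- by move=> [b r] h; exists b, r, 0; rewrite rmorph0 scale0r addr0 mul0r addr0.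
- move=> h; apply: (nd c); apply: h; exists 0, 0, 1.
  by rewrite rmorph1 scale1r add0r mul1r add0r.
Qed.


Lemma Re_phi (r s : R) : complex.Re (rc r - 'i%C * rc s) = r.
Proof. by rewrite /= !mul0r !mul1r subrr subr0. Qed.

Lemma HB_ext' : exists phi : A -> (R[i])^o,
  [/\ linf phi, phi x = 1, (forall a, `|phi a| <= e^-1 * `|a|) & (forall v, V v -> phi v = 0)].
Proof.
have [M [gM maxM]] := exists_max.
have tot := max_total gM maxM.
case: gM => fM lM eM dM.
pose g a := sval (cid (tot a)).
have hg a : M (a, g a) by exact: svalP (cid (tot a)).
have gval a r : M (a, r) -> g a = r by move=> h; exact: fM _ _ _ (hg a) h.
have glin t a b : g (rc t *: a + b) = t * g a + g b by apply: gval; apply: lM.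
have gext v t : V v -> g (v + t *: x) = complex.Re t by move=> Vv; apply: gval; apply: eM.
have gdom a : g a <= pn a by exact: dM _ _ (hg a).
have g0 : g 0 = 0 by have := gext 0 0 V0; rewrite scale0r addr0.
have gscale t a : g (rc t *: a) = t * g a by have := glin t a 0; rewrite !addr0 g0 addr0.
have ii w : 'i%C *: ('i%C *: w) = - w :> A by rewrite scalerA -expr2 sqr_i scaleN1r.
pose phi a : (R[i])^o := rc (g a) - 'i%C * rc (g ('i%C *: a)).
have kdec (k : R[i]) (u : A) : k *: u = rc (complex.Re k) *: u + rc (complex.Im k) *: ('i%C *: u).
  by rewrite {1}[k]complexE scalerDl mulrC -scalerA.
have linphi : linf phi.
  move=> k u v.
  have e1 : g (k *: u + v) = complex.Re k * g u + complex.Im k * g ('i%C *: u) + g v.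
    by rewrite kdec -addrA glin glin addrA.
  have e2 : g ('i%C *: (k *: u + v)) =
      complex.Re k * g ('i%C *: u) + (- complex.Im k) * g u + g ('i%C *: v).
    have -> : 'i%C *: (k *: u + v) =
        rc (complex.Re k) *: ('i%C *: u) + (rc (- complex.Im k) *: u + 'i%C *: v).
      have sc (a b : R[i]) (w : A) : a *: (b *: w) = b *: (a *: w) by rewrite !scalerA mulrC.
      rewrite [k *: u]kdec !scalerDr (sc 'i%C) (sc 'i%C) ii rmorphN scaleNr scalerN addrA; reflexivity.
    by rewrite glin glin addrA.
  rewrite /phi e1 e2.
  have kE : k = rc (complex.Re k) + 'i%C * rc (complex.Im k) := complexE k.
  set k1 := complex.Re k in kE *; set k2 := complex.Im k in kE *.
  rewrite kE.
  rewrite !rmorphD !rmorphM rmorphN.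
  apply/eqP; rewrite -subr_eq0.
  set D := (X in X == 0).
  have -> : D = (1 + 'i%C ^+ 2) * (rc (complex.Im k) * rc (g ('i%C *: u))) :> R[i].
    by rewrite /D; ring.
  by rewrite sqr_i addrN mul0r.
have gzero w : V w -> g w = 0.
  by move=> Vw; have := gext w 0 Vw; rewrite scale0r addr0 => -> //.
exists phi; split => //.
- have gx : g x = 1 by have := gext 0 1 V0; rewrite scale1r add0r => -> //.
  have gix : g ('i%C *: x) = 0 by have := gext 0 'i%C V0; rewrite add0r => -> //.
  by rewrite /phi gx gix rmorph1 rmorph0 mulr0 subr0.
- move=> a; set z := phi a.
  have [z0|zn0] := eqVneq z 0.
    by rewrite z0 normr0 mulr_ge0 ?invr_ge0 ?normr_ge0 ?(ltW e0).
  pose u := `|z| / z.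
  have phiu : phi (u *: a) = `|z| by rewrite (lin_scale u a linphi) /u divfK.
  have normu : `|u| = 1.
    by rewrite /u normrM normfV normr_id mulfV // normr_eq0.
  have ge1 : 0 <= `|a| / e by rewrite divr_ge0 ?normr_ge0 ?(ltW e0).
  rewrite (real_eq_rc (normr_ge0 z)) mulrC (real_eq_rc ge1) lecR.
  rewrite -phiu Re_phi; apply: le_trans (gdom _) _.
  by rewrite /pn normrZ normu mul1r.
- move=> v Vv; rewrite /phi gzero // gzero; last exact: VZ.
  by rewrite rmorph0 mulr0 subr0.
Qed.

End HB.

Section Main.
Variables (R : realType) (A : normedModType R[i]).

Definition Kset (x : A) (c : R[i]) : set (dual A) :=
  [set phi | sval phi x = 1 /\ forall a, `|sval phi a| <= c * `|a|].

Lemma HB_ext (V : set A) (x : A) (e : R[i]) : 0 < e -> closed_subspace V ->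
  (forall v, V v -> e <= `|x - v|) ->
  exists phi : dual A, Kset x e^-1 phi /\ (forall v, V v -> sval phi v = 0).
Proof.
move=> e0 [_ [V0 Vlin]] dist.
have [f [lf fx fb fV]] := @HB_ext' R A e e0 V x V0 Vlin dist.
have cf : is_cont_linear_functional f.
  by split; [exact: lf| apply: (@lin_bounded_cont R A f e^-1 lf _ fb); rewrite invr_gt0].
by exists (exist _ f cf).
Qed.

Lemma Kset_compact (x : A) (c : R[i]) : 0 < c -> compact_wrt (@dual_open R A) (Kset x c).
Proof. exact: Kset_compact'. Qed.

Lemma compact_bounded_dual (K' : set (dual A)) : compact_wrt (@dual_open R A) K' ->
  exists c : R[i], 0 < c /\ forall phi, K' phi -> forall a, `|sval phi a| <= c * `|a|.
Proof. exact: compact_bounded_dual'. Qed.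

Lemma dual_sub (phi : dual A) (u v : A) : sval phi (u - v) = sval phi u - sval phi v.
Proof.
case: (svalP phi) => lin _.
have := lin (-1) v u; rewrite scaleN1r mulN1r => h.
by rewrite addrC h addrC.
Qed.

Lemma dir1 : @lower_vietoris_subbasis R A `<=` generated_topology (@annihilator_subbasis R A).
Proof.
move=> W [U [oU ->]]; apply: gen_local => V0 [x [V0x Ux]].
have : nbhs x U by apply: open_nbhs_nbhs.
move=> /nbhs_ballP [e e0 beU].
exists [set V : MaxA A | annihilator V `&` Kset x e^-1 = set0]; split; [|split].
- apply: gen_base; exists (Kset x e^-1); split => //.
  by apply: Kset_compact; rewrite invr_gt0.
- apply/seteqP; split => // phi [/= an [phix _]].
  by move: (an x V0x); rewrite phix => /eqP; rewrite oner_eq0.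
- move=> V /= hV; apply/set0P/negP => /eqP VU0.
  have hd : forall v, sval V v -> e <= `|x - v|.
    move=> v Vv; rewrite real_leNgt ?ger0_real ?normr_ge0 ?ltW //.
    apply/negP => xv; have : (sval V `&` U) v by split => //; apply: beU; rewrite -ball_normE.
    by rewrite VU0.
  have [phi [Kphi an]] := HB_ext e0 (svalP V) hd.
  by have : (annihilator V `&` Kset x e^-1) phi by []; rewrite hV.
Qed.

Lemma dual0 (phi : dual A) : sval phi 0 = 0.
Proof. by have := dual_sub phi 0 0; rewrite subr0 subrr. Qed.

Lemma dir2 : @annihilator_subbasis R A `<=` generated_topology (@lower_vietoris_subbasis R A).
Proof.
move=> W [K' [cK' ->]]; apply: gen_local => V0 /= hV0.
have [c [c0 bc]] := compact_bounded_dual cK'.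
have hx : forall p : {phi | K' phi}, exists x, sval V0 x /\ sval (sval p) x = 1.
  move=> [phi Kphi] /=.
  have : ~ annihilator V0 phi.
    by move=> an; have : (annihilator V0 `&` K') phi by []; rewrite hV0.
  move=> /existsNP [x /not_implyP [V0x phix]].
  have phix0 : sval phi x != 0 by apply/eqP.
  exists ((sval phi x)^-1 *: x); split.
    case: (svalP V0) => _ [V00 lin]; have := lin (sval phi x)^-1 x 0 V0x V00.
    by rewrite addr0.
  case: (svalP phi) => lin _; have := lin (sval phi x)^-1 x 0.
  by rewrite addr0 dual0 addr0 mulVf.
pose xp p := cid (hx p).
pose F (p : {phi | K' phi}) := [set psi : dual A | sval psi @` [set sval (xp p)] `<=` [set z | 2^-1 < `|z|]].
have oF : forall p, dual_open (F p).
  move=> p; apply: gen_base; exists [set sval (xp p)], [set z | 2^-1 < `|z|].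
  split; [exact: compact_set1| split => //].
  exact: open_norm_gt.
have cov : K' `<=` \bigcup_p F p.
  move=> phi Kphi; exists (exist _ phi Kphi) => //= _ [_ -> <-].
  case: (svalP (xp (exist _ phi Kphi))) => _ /= ->.
  by rewrite normr1 invf_lt1 ?ltr1n.
have [D [fD covD]] := cK' _ F oF cov.
pose r := (2 * c)^-1.
have r0 : 0 < r by rewrite invr_gt0 mulr_gt0.
exists (\bigcap_(p in D) [set V : MaxA A | sval V `&` ball (sval (xp p)) r !=set0]).
split; [|split].
- apply: gen_bigcap => // p; apply: gen_base; exists (ball (sval (xp p)) r); split => //.
  exact: ball_open.
- move=> p _ /=; exists (sval (xp p)); split; first by case: (svalP (xp p)).
  exact: ballxx.
- move=> V NV /=; apply/seteqP; split => // psi [anpsi Kpsi].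
  have [p Dp Fp] := covD _ Kpsi.
  have [y [Vy yb]] := NV p Dp.
  have h1 : 2^-1 < `|sval psi (sval (xp p))| by apply: Fp; exists (sval (xp p)).
  have h2 : `|sval psi (sval (xp p))| < 2^-1.
    rewrite -[sval psi (sval (xp p))]subr0 -(anpsi y Vy) -dual_sub.
    apply: (le_lt_trans (bc _ Kpsi _)).
    move: yb; rewrite -ball_normE /ball_ => lt.
    have -> : (2^-1 : R[i]) = c * r by rewrite /r invfM mulrCA mulfV ?mulr1 // gt_eqF.
    by rewrite ltr_pM2l.
  by have := lt_trans h1 h2; rewrite ltxx.
Qed.

Theorem lemma7p13' :
  generated_topology (@lower_vietoris_subbasis R A) =
  generated_topology (@annihilator_subbasis R A).
Proof.
apply/seteqP; split; apply: gen_sub; [exact: dir1|exact: dir2].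
Qed.
End Main.

Theorem lemma7p13 (R : realType) (A : normedModType R[i]) :
  generated_topology (@lower_vietoris_subbasis R A) =
  generated_topology (@annihilator_subbasis R A).
Proof. exact: lemma7p13'. Qed.
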